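(* Let $\mathbb{K}$ be a field of characteristic zero, $a_1,\ldots,a_s\in\mathbb{Z}^d$, $A$ the $d\times s$ matrix with columns $a_i$, and $\varphi:(\mathbb{K}\setminus\{0\})^d\to\mathbb{K}^s$, $x\mapsto(x^{a_1},\ldots,x^{a_s})$. Let $n\ge1$, let $\alpha_1<\cdots<\alpha_D$ be the elements of $\Lambda_{d,n}$, and let $J=\{\beta_1,\ldots,\beta_D\}\subset\Lambda_{s,n}$ with $\beta_1<\cdots<\beta_D$. Let $L_J$ be the $D\times D$ submatrix of $D^n_x(\varphi)$ formed by the rows $\beta_1,\ldots,\beta_D$ and all columns. Then for $x\in(\mathbb{K}\setminus\{0\})^d$, $$\det(L_J)=\frac{x^{A\beta_1+\cdots+A\beta_D}}{x^{\alpha_1+\cdots+\alpha_D}}\det(L_J^c),$$ where $L_J^c=(c_{\beta_i,\alpha_j})_{i,j}$.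
   Context: $\Lambda_{t,n}=\{\gamma\in\mathbb{N}^t:1\le|\gamma|\le n\}$ with graded lexicographic order; $|\gamma|$ the sum of entries; $D=\binom{n+d}{d}-1$, $M=\binom{n+s}{s}-1$; $\alpha!=\prod_i\alpha(i)!$; $\binom\beta\gamma=\prod_i\binom{\beta(i)}{\gamma(i)}$; $x^m=\prod_ix_i^{m(i)}$. For a morphism $\varphi=(g_1,\ldots,g_s)$ regular at $x$, $D^n_x(\varphi)=\big(\frac1{\alpha!}\frac{\partial^\alpha(\varphi-\varphi(x))^\beta}{\partial X^\alpha}|_x\big)_{\beta\in\Lambda_{s,n},\alpha\in\Lambda_{d,n}}$ (an $M\times D$ matrix), where $(\varphi-\varphi(x))^\beta=\prod_j(g_j-g_j(x))^{\beta(j)}$. With $A_1,\ldots,A_d$ the rows of $A$: $b_{\gamma,\alpha}=\prod_{i=1}^d\prod_{j=0}^{\alpha(i)-1}(A_i\cdot\gamma-j)$ and $c_{\beta,\alpha}=\frac1{\alpha!}\sum_{\gamma\le\beta,\gamma\ne0}(-1)^{|\beta-\gamma|}\binom\beta\gamma b_{\gamma,\alpha}$ (constants depending only on $A$, $\beta$, $\alpha$). *)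

(* Defs.v *)
From mathcomp Require Import all_boot all_order all_algebra.
Set Implicit Arguments. Unset Strict Implicit. Unset Printing Implicit Defensive.
Import Order.TTheory GRing.Theory Num.Theory.
Local Open Scope ring_scope.

Fixpoint allvecs (t n : nat) : seq (seq nat) :=
  if t is t'.+1 then
    flatten [seq [seq k :: v | v <- allvecs t' n] | k <- iota 0 n.+1]
  else [:: [::]].

Fixpoint below (b : seq nat) : seq (seq nat) :=
  if b is k :: b' then
    flatten [seq [seq c :: g | g <- below b'] | c <- iota 0 k.+1]
  else [:: [::]].

Fixpoint lexle (u v : seq nat) : bool :=
  match u, v with
  | [::], _ => true
  | _ :: _, [::] => false
  | a :: u', b :: v' => (a < b)%N || ((a == b) && lexle u' v')
  end.

Definition grlex_le (u v : seq nat) : bool :=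
  (sumn u < sumn v)%N || ((sumn u == sumn v) && lexle u v).
Definition grlex_lt (u v : seq nat) : bool := grlex_le u v && (u != v).

Definition Lambda (t n : nat) : seq (seq nat) :=
  sort grlex_le [seq v <- allvecs t n | (1 <= sumn v <= n)%N].

Definition Dim (n d : nat) : nat := ('C(n + d, d) - 1)%N.

Definition vfact (a : seq nat) : nat := \prod_(k <- a) k`!.
Definition vbinom (b g : seq nat) : nat := \prod_(p <- zip b g) 'C(p.1, p.2).

Section Laurent.
Variable K : fieldType.
Variable d : nat.

Definition mono (x : 'I_d -> K) (m : 'rV[int]_d) : K :=
  \prod_(i < d) (x i) ^ (m 0 i).

(* A Laurent polynomial in X_1..X_d is represented as a formal sum
   (list) of terms c * X^m. *)
Definition lpoly := seq (K * 'rV[int]_d).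

Definition lp_eval (p : lpoly) (x : 'I_d -> K) : K :=
  \sum_(t <- p) t.1 * mono x t.2.

Definition lp_mul (p q : lpoly) : lpoly :=
  [seq (t.1 * u.1, t.2 + u.2) | t : K * 'rV[int]_d <- p, u : K * 'rV[int]_d <- q].

Definition lp_one : lpoly := [:: (1, 0)].

Definition lp_pow (p : lpoly) (k : nat) : lpoly := iter k (lp_mul p) lp_one.

Definition lp_deriv (i : 'I_d) (p : lpoly) : lpoly :=
  [seq (t.1 * (t.2 0 i)%:~R, t.2 - delta_mx 0 i) | t : K * 'rV[int]_d <- p].

Definition lp_derivn (alpha : seq nat) (p : lpoly) : lpoly :=
  foldr (fun (i : 'I_d) (q : lpoly) => iter (nth 0%N alpha i) (lp_deriv i) q) p (enum 'I_d).

End Laurent.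

Section Matrix.
Variable K : fieldType.
Variables d s : nat.
Variable A : 'M[int]_(d, s).

Definition acol (j : 'I_s) : 'rV[int]_d := (col j A)^T.

Definition gshift (x : 'I_d -> K) (j : 'I_s) : lpoly K d :=
  [:: (1, acol j); (- mono x (acol j), 0)].

(* (phi - phi(x))^beta = prod_j (g_j - g_j(x))^{beta(j)} *)
Definition phi_shift_pow (x : 'I_d -> K) (beta : seq nat) : lpoly K d :=
  foldr (fun (j : 'I_s) (q : lpoly K d) => lp_mul (lp_pow (gshift x j) (nth 0%N beta j)) q)
        (lp_one K d) (enum 'I_s).

(* entry (beta, alpha) of D^n_x(phi) *)
Definition Dentry (x : 'I_d -> K) (beta alpha : seq nat) : K :=
  ((vfact alpha)%:R)^-1 * lp_eval (lp_derivn alpha (phi_shift_pow x beta)) x.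

Definition Adot (i : 'I_d) (g : seq nat) : int :=
  \sum_(k < s) A i k * (nth 0%N g k)%:Z.

Definition bconst (g alpha : seq nat) : K :=
  \prod_(i < d) \prod_(j < nth 0%N alpha i) ((Adot i g)%:~R - j%:R).

Definition cconst (beta alpha : seq nat) : K :=
  ((vfact alpha)%:R)^-1 *
  \sum_(g <- below beta | sumn g != 0%N)
     (-1) ^+ (sumn beta - sumn g) * (vbinom beta g)%:R * bconst g alpha.

Definition Avec (beta : seq nat) : 'rV[int]_d := \row_i Adot i beta.

Definition ivec (alpha : seq nat) : 'rV[int]_d := \row_i (nth 0%N alpha i)%:Z.

Variable n : nat.

Definition alphaj (j : 'I_(Dim n d)) : seq nat := nth [::] (Lambda d n) j.

Definition LJ (b : 'I_(Dim n d) -> seq nat) (x : 'I_d -> K) : 'M[K]_(Dim n d) :=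
  \matrix_(i, j) Dentry x (b i) (alphaj j).

Definition LJc (b : 'I_(Dim n d) -> seq nat) : 'M[K]_(Dim n d) :=
  \matrix_(i, j) cconst (b i) (alphaj j).

End Matrix.

(* Main.v *)
Require Import Defs.
From mathcomp Require Import all_boot all_order all_algebra.
From mathcomp Require Import zify ring.
From Stdlib Require Import FunctionalExtensionality.
Import Order.TTheory GRing.Theory Num.Theory.
Local Open Scope ring_scope.
Set Implicit Arguments. Unset Strict Implicit.

Section Gen.
Variable K : fieldType.
Variable d : nat.
Notation vec := ('rV[int]_d).

Definition E (G : vec -> K) (p : lpoly K d) : K := \sum_(t <- p) t.1 * G t.2.
Definition Sh (p : lpoly K d) (G : vec -> K) : vec -> K :=
  fun m => E (fun m' => G (m' + m)) p.
Definition Dl (v : vec) (Q : vec -> K) : vec -> K := fun m => Q (m + v) - Q m.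

Lemma E_mul G p q : E G (lp_mul p q) = E (Sh p G) q.
Proof.
rewrite /E /lp_mul big_allpairs_dep /=.
rewrite exchange_big /=; apply: eq_bigr => u _.
rewrite mulr_sumr; apply: eq_bigr => t _ /=.
ring.
Qed.

Lemma E_one G : E G (lp_one K d) = G 0.
Proof. by rewrite /E big_cons big_nil /= mul1r addr0. Qed.

Lemma E_pow G p k : E G (lp_pow p k) = iter k (Sh p) G 0.
Proof.
elim: k G => [|k IH] G; first by rewrite /= E_one.
by rewrite /lp_pow iterS -/(lp_pow p k) E_mul IH iterSr.
Qed.

Lemma Sh_transl p k G m :
  iter k (Sh p) (fun m' => G (m' + m)) = (fun m' => iter k (Sh p) G (m' + m)).
Proof.
elim: k => [|k IH] //=; rewrite IH; apply: functional_extensionality => m0.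
by rewrite /Sh; congr E; apply: functional_extensionality => m'; rewrite addrA.
Qed.

Lemma Sh_pow p k : Sh (lp_pow p k) = iter k (Sh p).
Proof.
apply: functional_extensionality => G; apply: functional_extensionality => m.
by rewrite {1}/Sh E_pow Sh_transl add0r.
Qed.

Lemma E_foldr (I : Type) (f : I -> lpoly K d) G (l : seq I) :
  E G (foldr (fun j q => lp_mul (f j) q) (lp_one K d) l) =
  foldl (fun H j => Sh (f j) H) G l 0.
Proof.
elim: l G => [|j l IH] G /=; first by rewrite E_one.
by rewrite E_mul IH.
Qed.

Lemma Dl_iter (v : vec) (Q : vec -> K) b w :
  iter b (Dl v) Q w =
  \sum_(c < b.+1) (-1) ^+ (b - c) * ('C(b, c))%:R * Q (w + v *+ c).
Proof.
elim: b w => [|b IH] w.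
  by rewrite big_ord1 /= subn0 expr0 bin0 !mul1r mulr0n addr0.
rewrite iterS {1}/Dl !IH.
set f := fun c : nat => Q (w + v *+ c).
have Hf1 : forall c, Q (w + v + v *+ c) = f c.+1.
  by move=> c; rewrite /f mulrS addrA.
have Hf0 : forall c, Q (w + v *+ c) = f c by [].
under eq_bigr do rewrite Hf1.
under [X in _ - X]eq_bigr do rewrite Hf0.
under [RHS]eq_bigr do rewrite Hf0.
rewrite [RHS]big_ord_recl /= subn0 bin0.
under [X in _ = _ + X]eq_bigr do rewrite /bump add1n subSS binS natrD mulrDr mulrDl.
rewrite big_split /=.
set A := \sum_(i < b.+1) (-1) ^+ (b - i) * 'C(b, i)%:R * f i.+1.
set X := \sum_(i < b.+1) (-1) ^+ (b - i) * 'C(b, i.+1)%:R * f i.+1.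
set B := \sum_(c < b.+1) (-1) ^+ (b - c) * 'C(b, c)%:R * f c.
suff H : (-1) ^+ b.+1 * 1 * f 0%N + X = - B.
  by rewrite addrA H addrC.
rewrite /B big_ord_recl /= subn0 bin0.
rewrite /X big_ord_recr /= bin_small // mulr0n mulr0 mul0r addr0.
rewrite opprD -sumrN exprS mulN1r !mulNr; congr (_ + _).
apply: eq_bigr => c _.
rewrite /bump /= add1n -(subnSK (ltn_ord c)) exprS mulN1r.
by rewrite !mulNr.
Qed.

End Gen.


Section Mono.
Variable K : fieldType.
Variable d : nat.
Notation vec := ('rV[int]_d).
Variable x : 'I_d -> K.
Hypothesis Hx : forall i, x i != 0.

Lemma monoD u w : mono x (u + w) = mono x u * mono x w.
Proof.
rewrite /mono -big_split; apply: eq_bigr => i _.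
by rewrite mxE exprzDr // unitfE.
Qed.

Lemma mono0 : mono x 0 = 1.
Proof. by rewrite /mono big1 // => i _; rewrite mxE expr0z. Qed.

Lemma monoN u : mono x (- u) = (mono x u)^-1.
Proof.
rewrite /mono -prodfV; apply: eq_bigr => i _.
by rewrite mxE invr_expz.
Qed.

Lemma monoB u w : mono x (u - w) = mono x u / mono x w.
Proof. by rewrite monoD monoN. Qed.

Lemma monoMn u k : mono x (u *+ k) = mono x u ^+ k.
Proof. elim: k => [|k IH]; first by rewrite mulr0n mono0 expr0.
by rewrite mulrS monoD IH exprS. Qed.

Lemma mono_sum (I : Type) (r : seq I) (P : pred I) (F : I -> vec) :
  mono x (\sum_(i <- r | P i) F i) = \prod_(i <- r | P i) mono x (F i).
Proof. exact: (big_morph _ monoD mono0). Qed.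

Definition Dop (i : 'I_d) (G : vec -> K) : vec -> K :=
  fun m => (m 0 i)%:~R * G (m - delta_mx 0 i).

Lemma E_deriv G i p : E G (lp_deriv i p) = E (Dop i G) p.
Proof. by rewrite /E big_map; apply: eq_bigr => t _ /=; rewrite /Dop mulrA. Qed.

Lemma E_derivk G i k p : E G (iter k (lp_deriv i) p) = E (iter k (Dop i) G) p.
Proof.
elim: k G => [|k IH] G //.
by rewrite iterS E_deriv IH iterSr.
Qed.

Lemma E_derivl (a : 'I_d -> nat) G p l :
  E G (foldr (fun i q => iter (a i) (lp_deriv i) q) p l) =
  E (foldl (fun H i => iter (a i) (Dop i) H) G l) p.
Proof.
elim: l G => [|i l IH] G //=.
by rewrite E_derivk IH.
Qed.

Definition ff (z : int) (k : nat) : K := \prod_(j < k) (z%:~R - j%:R).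

Lemma Dop_iter i k P v :
  iter k (Dop i) (fun m => P m * mono x (m - v)) =
  (fun m => ff (m 0 i) k * P (m - delta_mx 0 i *+ k) * mono x (m - (v + delta_mx 0 i *+ k))).
Proof.
elim: k => [|k IH].
  apply: functional_extensionality => m /=.
  by rewrite /ff big_ord0 mul1r !mulr0n subr0 addr0.
rewrite iterS IH; apply: functional_extensionality => m /=.
rewrite /Dop /ff big_ord_recl /= subr0 !mulrA.
have -> : \prod_(j < k) (((m - 'e_i) 0 i)%:~R - j%:R) =
          \prod_(j < k) ((m 0 i)%:~R - (bump 0 j)%:R :> K).
  apply: eq_bigr => j _; rewrite !mxE !eqxx /= intrB /bump /= add1n -natr1.
  ring.
have -> : m - 'e_i - 'e_i *+ k = m - 'e_i *+ k.+1.
  by rewrite mulrS opprD addrA.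
have E1 : m - 'e_i - (v + 'e_i *+ k) = m - (v + 'e_i *+ k.+1) :> vec.
  by rewrite mulrS [in RHS]addrCA [in RHS]opprD addrA.
by rewrite E1.
Qed.

End Mono.


Lemma below_prop (B g : seq nat) : g \in below B -> size g = size B /\ (sumn g <= sumn B)%N.
Proof.
elim: B g => [|b B IH] g; first by rewrite inE => /eqP ->.
move=> /flatten_mapP [c]; rewrite mem_iota add0n => /andP [_ Hc] /mapP [g' Hg' ->] /=.
have [H1 H2] := IH g' Hg'; split; first by rewrite H1.
rewrite ltnS in Hc; lia.
Qed.

Lemma vbinom_cons b B c g : vbinom (b :: B) (c :: g) = ('C(b, c) * vbinom B g)%N.
Proof. by rewrite /vbinom /= big_cons. Qed.
Lemma sumn_cons a s : sumn (a :: s) = (a + sumn s)%N.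
Proof. by []. Qed.
Lemma sub_split a b c g : (c <= a)%N -> (g <= b)%N -> (a + b - (c + g) = (a - c) + (b - g))%N.
Proof. lia. Qed.

Section Gen2.
Variable K : fieldType.
Variable d : nat.
Notation vec := ('rV[int]_d).

Lemma Dl_fold (I : Type) (av : I -> vec) (bt : I -> nat) (l : seq I) (Q : vec -> K) m :
  foldl (fun Q j => iter (bt j) (Dl (av j)) Q) Q l m =
  \sum_(g <- below (map bt l))
     (-1) ^+ (sumn (map bt l) - sumn g) * (vbinom (map bt l) g)%:R *
     Q (m + \sum_(p <- zip l g) av p.1 *+ p.2).
Proof.
elim: l Q m => [|j l IH] Q m.
  by rewrite /= big_cons big_nil /= subnn expr0 mul1r /vbinom big_nil !addr0 [zip _ _]/= big_nil mul1r.
rewrite [LHS]/= IH.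
change (below (map bt (j::l))) with
  (flatten [seq [seq c :: g | g <- below (map bt l)] | c <- iota 0 (bt j).+1]).
rewrite big_flatten big_map.
under eq_bigr do rewrite big_map.
rewrite exchange_big.
rewrite big_seq [RHS]big_seq; apply: eq_bigr => g Hg.
have [_ Hsg] := below_prop Hg.
have -> : iota 0 (bt j).+1 = index_iota 0 (bt j).+1 by rewrite /index_iota subn0.
rewrite Dl_iter mulr_sumr big_mkord.
apply: eq_bigr => c _; have Hc := ltn_ord c; rewrite ltnS in Hc.
rewrite (_ : zip (j :: l) ((c : nat) :: g) = (j, c : nat) :: zip l g) // big_cons /=.
rewrite vbinom_cons sub_split //.
rewrite exprD natrM (addrC (av j *+ c)) addrA.
ring.
Qed.

End Gen2.


Section X.
Variable K : fieldType.
Variable d : nat.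
Notation vec := ('rV[int]_d).
Variable x : 'I_d -> K.
Hypothesis Hx : forall i, x i != 0.

Lemma Dop_fold (a : 'I_d -> nat) (l : seq 'I_d) : uniq l -> forall (P : vec -> K) (v : vec),
  (forall i m k, i \in l -> P (m - 'e_i *+ k) = P m) ->
  foldl (fun H i => iter (a i) (Dop i) H) (fun m => P m * mono x (m - v)) l =
  (fun m => (\prod_(i <- l) ff K (m 0 i) (a i)) * P m *
            mono x (m - (v + \sum_(i <- l) ('e_i : vec) *+ a i))).
Proof.
elim: l => [|i l IH] Hu P v HP.
  by apply: functional_extensionality => m; rewrite !big_nil mul1r addr0.
case/andP: Hu => Hil Hu.
rewrite [LHS]/= Dop_iter.
have -> : (fun m : vec => ff K (m 0 i) (a i) * P (m - 'e_i *+ a i) * mono x (m - (v + 'e_i *+ a i))) =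
          (fun m : vec => (ff K (m 0 i) (a i) * P m) * mono x (m - (v + 'e_i *+ a i))).
  by apply: functional_extensionality => m; rewrite HP // mem_head.
rewrite IH //.
  apply: functional_extensionality => m.
  rewrite !big_cons addrA; congr (_ * _); ring.
move=> j m k Hj; rewrite HP ?inE ?Hj ?orbT //; congr (_ * _).
rewrite !mxE mulmxnE !mxE /=.
have -> : (i == j) = false by apply/eqP => Eji; move: Hil; rewrite Eji Hj.
by rewrite mul0rn subr0.
Qed.

Lemma Sh_g (a : vec) C Q :
  Sh [:: (1, a); (- mono x a, 0)] (fun m => C * Q m * mono x m) =
  (fun m => (C * mono x a) * Dl a Q m * mono x m).
Proof.
apply: functional_extensionality => m.
rewrite /Sh /E !big_cons big_nil /= addr0 add0r mul1r monoD // /Dl [a + m]addrC.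
ring.
Qed.

Lemma Sh_g_iter (a : vec) k C Q :
  iter k (Sh [:: (1, a); (- mono x a, 0)]) (fun m => C * Q m * mono x m) =
  (fun m => (C * mono x a ^+ k) * iter k (Dl a) Q m * mono x m).
Proof.
elim: k => [|k IH].
  by apply: functional_extensionality => m; rewrite /= expr0 mulr1.
by rewrite iterS IH Sh_g; apply: functional_extensionality => m; rewrite exprSr mulrA.
Qed.

Lemma Sh_fold (I : Type) (av : I -> vec) (bt : I -> nat) (l : seq I) C Q :
  foldl (fun H j => Sh (lp_pow [:: (1, av j); (- mono x (av j), 0)] (bt j)) H)
        (fun m => C * Q m * mono x m) l =
  (fun m => (C * \prod_(j <- l) mono x (av j) ^+ bt j) *
            foldl (fun Q j => iter (bt j) (Dl (av j)) Q) Q l m * mono x m).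
Proof.
elim: l C Q => [|j l IH] C Q /=.
  by apply: functional_extensionality => m; rewrite big_nil mulr1.
rewrite Sh_pow Sh_g_iter IH; apply: functional_extensionality => m.
by rewrite big_cons mulrA.
Qed.

End X.


Lemma map_nth_enum (s : nat) (g : seq nat) : size g = s ->
  [seq nth 0%N g (val j) | j <- enum 'I_s] = g.
Proof.
move=> Hg; rewrite (map_comp (nth 0%N g) val) val_enum_ord -Hg.
exact: mkseq_nth.
Qed.

Lemma zip_self (T U : Type) (f : T -> U) (l : seq T) :
  zip l (map f l) = map (fun j => (j, f j)) l.
Proof. by elim: l => //= a l ->. Qed.

Lemma sum_zip_enum (R : nmodType) (s : nat) (g : seq nat) (F : 'I_s -> nat -> R) :
  size g = s ->
  \sum_(p <- zip (enum 'I_s) g) F p.1 p.2 = \sum_(j <- enum 'I_s) F j (nth 0%N g j).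
Proof.
move=> Hg; have Eg := map_nth_enum Hg.
rewrite -[in LHS]Eg zip_self big_map.
by apply: eq_bigr.
Qed.

Lemma nth_le_sumn (g : seq nat) k : (nth 0%N g k <= sumn g)%N.
Proof.
elim: g k => [|a g IH] [|k] //=; first by rewrite leq_addr.
by apply: leq_trans (IH k) _; rewrite leq_addl.
Qed.

Lemma sumn0_nth (a : seq nat) (d : nat) : size a = d ->
  (forall i, (i < d)%N -> nth 0%N a i = 0%N) -> sumn a = 0%N.
Proof.
elim: a d => [|c a IH] [|d] //= [Hs] H.
have := H 0%N isT; rewrite /= => ->; rewrite add0n.
by apply: (IH d Hs) => i Hi; apply: (H i.+1).
Qed.

Section Key.
Variable K : fieldType.
Variables d s : nat.
Variable A : 'M[int]_(d, s).
Notation vec := ('rV[int]_d).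

Lemma AvecE g : size g = s ->
  Avec A g = \sum_(j <- enum 'I_s) acol A j *+ nth 0%N g j.
Proof.
move=> Hg; apply/rowP => i; rewrite !mxE summxE big_enum /=.
apply: eq_bigr => j _; rewrite mulmxnE !mxE.
rewrite -natz mulr_natr; reflexivity.
Qed.

Lemma ivecE (alpha : seq nat) :
  \sum_(i <- enum 'I_d) ('e_i : vec) *+ nth 0%N alpha i = ivec d alpha.
Proof.
apply/rowP => i; rewrite !mxE summxE big_enum /=.
rewrite (bigD1 i) //= big1 ?addr0.
  by rewrite mulmxnE !mxE !eqxx /= -natz.
by move=> j Hj; rewrite mulmxnE !mxE /= eq_sym (negbTE Hj) mul0rn.
Qed.

Lemma bconst0 (g alpha : seq nat) : sumn g = 0%N -> size alpha = d ->
  (0 < sumn alpha)%N -> bconst K A g alpha = 0.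
Proof.
move=> Hg Ha Hpos.
have HA : forall i, Adot A i g = 0.
  move=> i; rewrite /Adot big1 // => k _.
  have := nth_le_sumn g k; rewrite Hg leqn0 => /eqP ->; by rewrite mulr0.
have [i Hi] : exists i : 'I_d, (0 < nth 0%N alpha i)%N.
  apply/existsP; apply: contraT; rewrite negb_exists => /forallP H.
  have : sumn alpha = 0%N.
    apply: (sumn0_nth Ha) => i Hi.
    by have := H (Ordinal Hi); rewrite -leqNgt leqn0 => /eqP.
  by move=> E; move: Hpos; rewrite E.
rewrite /bconst (bigD1 i) //=.
case E: (nth 0%N alpha i) Hi => [|k] // _.
by rewrite big_ord_recl /= HA subr0 mul0r mul0r.
Qed.

Variable x : 'I_d -> K.
Hypothesis Hx : forall i, x i != 0.

Lemma Dentry_eq (beta alpha : seq nat) : size beta = s -> size alpha = d ->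
  (0 < sumn alpha)%N ->
  Dentry A x beta alpha = mono x (Avec A beta) / mono x (ivec d alpha) * cconst K A beta alpha.
Proof.
move=> Hb Ha Hpos.
rewrite /Dentry.
have -> : forall p, lp_eval p x = E (mono x) p by [].
set p := phi_shift_pow A x beta.
rewrite /lp_derivn E_derivl.
have -> : mono x = (fun m => (fun _ => 1) m * mono x (m - 0)).
  by apply: functional_extensionality => m; rewrite subr0 mul1r.
rewrite Dop_fold //; last exact: enum_uniq.
rewrite add0r ivecE.
set Q := fun m : vec => \prod_(i <- enum 'I_d) ff K (m 0 i) (nth 0%N alpha i).
have -> : (fun m : vec => Q m * 1 * mono x (m - ivec d alpha)) =
          (fun m => (mono x (ivec d alpha))^-1 * Q m * mono x m).
  apply: functional_extensionality => m.
  by rewrite monoB // mulr1; ring.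
rewrite /p /phi_shift_pow E_foldr /gshift Sh_fold // mono0 // mulr1.
rewrite Dl_fold map_nth_enum //.
rewrite !subr0 !mul1r.
rewrite (AvecE Hb) mono_sum //.
under [in RHS]eq_bigr do rewrite monoMn //.
have HQ : forall g, size g = s -> Q (0 + \sum_(p0 <- zip (enum 'I_s) g) acol A p0.1 *+ p0.2) = bconst K A g alpha.
  move=> g Hg; rewrite add0r (sum_zip_enum (fun j k => acol A j *+ k) Hg) -(AvecE Hg).
  rewrite /Q /bconst big_enum /=; apply: eq_bigr => i _.
  by rewrite /ff mxE.
rewrite /cconst.
have ES : \sum_(g <- below beta) (-1) ^+ (sumn beta - sumn g) * (vbinom beta g)%:R *
      Q (0 + \sum_(p0 <- zip (enum 'I_s) g) acol A p0.1 *+ p0.2) =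
   \sum_(g <- below beta | sumn g != 0%N)
      (-1) ^+ (sumn beta - sumn g) * (vbinom beta g)%:R * bconst K A g alpha.
  rewrite [RHS]big_mkcond big_seq [RHS]big_seq; apply: eq_bigr => g Hg.
  have [Hsz _] := below_prop Hg; rewrite HQ; last by rewrite Hsz.
  case: ifP => // /negbFE /eqP H0.
  by rewrite bconst0 // mulr0.
rewrite ES.
ring.
Qed.

End Key.

Local Close Scope ring_scope.

Lemma allvecs_size t n v : v \in allvecs t n -> size v = t.
Proof.
elim: t v => [|t IH] v; first by rewrite inE => /eqP ->.
move=> /flatten_mapP [k _] /mapP [w Hw ->] /=.
by rewrite (IH w Hw).
Qed.

Lemma count_allvecs n t m : m <= n ->
  count (fun v => sumn v <= m) (allvecs t n) = 'C(m + t, t).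
Proof.
elim: t m => [|t IH] m Hm; first by rewrite /= addn0 bin0.
change (allvecs t.+1 n) with
  (flatten [seq [seq k :: v | v <- allvecs t n] | k <- iota 0 n.+1]).
rewrite count_flatten -map_comp.
set h := fun k m => count (fun v => k + sumn v <= m) (allvecs t n).
have Eh : forall k, count (fun v => sumn v <= m) [seq k :: v | v <- allvecs t n] = h k m.
  by move=> k; rewrite count_map.
rewrite (eq_map (g := fun k => h k m)); last by move=> k /=; rewrite Eh.
rewrite sumnE big_map.
have -> : iota 0 n.+1 = index_iota 0 n.+1 by rewrite /index_iota subn0.
rewrite big_mkord.
have h0 : forall m, m <= n -> h 0 m = 'C(m + t, t).
  by move=> m' Hm'; rewrite /h -(IH m' Hm'); apply: eq_count => v; rewrite add0n.
have hS : forall k m, h k.+1 m.+1 = h k m.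
  by move=> k m'; rewrite /h; apply: eq_count => v; rewrite addSn ltnS.
have hbig : forall k m, m < k -> h k m = 0.
  move=> k m' Hk; rewrite /h (eq_count (a2 := pred0)) ?count_pred0 // => v /=.
  apply/negbTE; rewrite -ltnNge; apply: (leq_trans Hk); exact: leq_addr.
clear Eh; elim: m Hm => [|m IHm] Hm.
  rewrite big_ord_recl h0 // big1 ?addn0 ?add0n ?binn //.
  by move=> i _; rewrite hbig.
rewrite big_ord_recl h0 //.
under eq_bigr do rewrite /bump /= hS.
have := IHm (ltnW Hm); rewrite big_ord_recr /= hbig // addn0 => ->.
by rewrite (addSn m t.+1) binS addnC addSn addnS.
Qed.

Lemma size_Lambda t n : size (Lambda t n) = Dim n t.
Proof.
rewrite /Lambda size_sort size_filter /Dim.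
have := count_predUI (fun v => sumn v <= 0) (fun v => 1 <= sumn v <= n) (allvecs t n).
rewrite (eq_count (a1 := predU _ _) (a2 := fun v => sumn v <= n)); last first.
  by move=> v /=; case: (sumn v) => //= k; rewrite ltnS.
rewrite (eq_count (a1 := predI _ _) (a2 := pred0)); last first.
  by move=> v /=; case: (sumn v).
rewrite count_pred0 addn0 !count_allvecs // add0n binn.
move=> ->; lia.
Qed.

Lemma Lambda_prop t n v : v \in Lambda t n -> size v = t /\ 0 < sumn v.
Proof.
rewrite /Lambda mem_sort mem_filter => /andP [/andP [H1 _] Hv].
by split => //; apply: allvecs_size Hv.
Qed.

Local Open Scope ring_scope.


Theorem proposition2p3 (K : fieldType) (charK0 : [pchar K] =i pred0)
  (d s : nat) (A : 'M[int]_(d, s)) (n : nat) (Hn : (1 <= n)%N)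
  (b : 'I_(Dim n d) -> seq nat)
  (Hb : forall i, b i \in Lambda s n)
  (Hinc : forall i j : 'I_(Dim n d), (i < j)%N -> grlex_lt (b i) (b j))
  (x : 'I_d -> K) (Hx : forall i, x i != 0) :
  \det (@LJ K d s A n b x) =
    mono x (\sum_(i < Dim n d) @Avec d s A (b i)) /
    mono x (\sum_(j < Dim n d) ivec d (@alphaj d n j)) *
    \det (@LJc K d s A n b).
Proof.
have Ha : forall j : 'I_(Dim n d), size (alphaj j) = d /\ (0 < sumn (alphaj j))%N.
  move=> j; apply: Lambda_prop; rewrite /alphaj; apply: mem_nth.
  by rewrite size_Lambda.
have -> : LJ A b x = diag_mx (\row_i mono x (Avec A (b i))) *m LJc K A b *m
                     diag_mx (\row_j (mono x (ivec d (alphaj j)))^-1).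
  apply/matrixP => i j; rewrite mul_mx_diag mul_diag_mx !mxE.
  have [Hs _] := Lambda_prop (Hb i); have [Ha1 Ha2] := Ha j.
  by rewrite Dentry_eq // mulrAC.
rewrite !det_mulmx !det_diag !mono_sum // -prodfV.
under eq_bigr do rewrite mxE.
under [X in _ * _ * X]eq_bigr do rewrite mxE.
ring.
Qed.
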